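(* Let $n\ge2$, let $\tau_1,\dots,\tau_{n!}$ be the enumeration $S_n$ of simple $n$-braids defined below, and let $M_n$ be the $n!\times n!$ matrix with $(M_n)_{k,\ell}=1$ if $(\tau_k,\tau_\ell)$ is normal and $0$ otherwise. Then: (i) the first column and the last row of $M_n$ contain only $1$'s; the first row, except its first entry, and the last column, except its last entry, contain only $0$'s; (ii) the first $(n-1)!$ columns of $M_n$ consist of $n$ stacked copies of $M_{n-1}$; (iii) if $D_R(\tau_k)=D_R(\tau_{k'})$, then the $k$-th and $k'$-th rows of $M_n$ coincide; if $D_L(\tau_\ell)=D_L(\tau_{\ell'})$, then the $\ell$-th and $\ell'$-th columns of $M_n$ coincide.
   Context: $B_n^+$ is the positive braid monoid with generators $\sigma_1,\dots,\sigma_{n-1}$ and relations $\sigma_i\sigma_j=\sigma_j\sigma_i$ ($|i-j|\ge2$), $\sigma_i\sigma_j\sigma_i=\sigma_j\sigma_i\sigma_j$ ($|i-j|=1$). $\Delta_1=1$, $\Delta_m=\sigma_1\cdots\sigma_{m-1}\Delta_{m-1}$. Simple $m$-braids are the left (equivalently right) divisors of $\Delta_m$ in $B_m^+$. For simple $x$, $D_L(x)$ (resp. $D_R(x)$) is the set of $i$ with $\sigma_i$ a left (resp. right) divisor of $x$. A pair $(x,y)$ of simple $m$-braids is normal if $x=\gcd(\Delta_m,xy)$ (greatest common left divisor); equivalently $D_R(x)\supseteq D_L(y)$. With $\sigma_{i,m}=\sigma_i\sigma_{i+1}\cdots\sigma_{m-1}$ ($\sigma_{m,m}=1$), the list $S_m$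 of simple $m$-braids is defined by $S_1=(1)$ and $S_m=S_{m-1}{}^\frown\sigma_{m-1,m}S_{m-1}{}^\frown\cdots{}^\frown\sigma_{1,m}S_{m-1}$, where ${}^\frown$ is list concatenation and $xS$ is the list obtained by left-multiplying every entry of $S$ by $x$. Each $S_{m-1}$ is an initial segment of $S_m$; $\tau_k$ denotes the $k$-th entry, and $M_{n-1}$ is defined like $M_n$ from $S_{n-1}$ with normality in $B_{n-1}^+$. *)

(* Defs.v *)
(* MathComp (boot) world. Positive braid monoid B_n^+ modelled as words over
   the letters 1..n-1 (letter i = sigma_i) modulo the congruence generated by
   the braid relations. *)
From mathcomp Require Import all_boot.
From Stdlib Require Import ClassicalEpsilon.

Set Implicit Arguments. Unset Strict Implicit. Unset Printing Implicit Defensive.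

Definition word := seq nat.

Definition wf (n : nat) (w : word) : bool := all (fun i => (0 < i) && (i < n)) w.

Inductive beq : word -> word -> Prop :=
| beq_refl w : beq w w
| beq_sym u v : beq u v -> beq v u
| beq_trans u v w : beq u v -> beq v w -> beq u w
| beq_comm (u v : word) (i j : nat) : (i.+1 < j) || (j.+1 < i) ->
    beq (u ++ [:: i; j] ++ v) (u ++ [:: j; i] ++ v)
| beq_braid (u v : word) (i j : nat) : (i.+1 == j) || (j.+1 == i) ->
    beq (u ++ [:: i; j; i] ++ v) (u ++ [:: j; i; j] ++ v).

Definition ldiv (n : nat) (x z : word) : Prop := exists w, wf n w /\ beq (x ++ w) z.
Definition rdiv (n : nat) (x z : word) : Prop := exists w, wf n w /\ beq (w ++ x) z.

Definition sig (i m : nat) : word := iota i (m - i).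

Fixpoint Delta (m : nat) : word :=
  match m with
  | 0 => [::]
  | m'.+1 => sig 1 m'.+1 ++ Delta m'
  end.

Definition DL (n : nat) (x : word) (i : nat) : Prop := 0 < i < n /\ ldiv n [:: i] x.
Definition DR (n : nat) (x : word) (i : nat) : Prop := 0 < i < n /\ rdiv n [:: i] x.

(* (x,y) normal : x = gcd(Delta_n, x y) (greatest common left divisor) *)
Definition normal (n : nat) (x y : word) : Prop :=
  [/\ ldiv n x (Delta n), ldiv n x (x ++ y) &
      forall z, wf n z -> ldiv n z (Delta n) -> ldiv n z (x ++ y) -> ldiv n z x].

(* The list S_m: S_1 = (1), S_m = S_{m-1} ^ sigma_{m-1,m} S_{m-1} ^ ... ^ sigma_{1,m} S_{m-1}
   (the first block is sigma_{m,m} S_{m-1} = S_{m-1}). *)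
Fixpoint Slist (m : nat) : seq word :=
  match m with
  | 0 => [::]
  | 1 => [:: [::]]
  | m'.+1 => flatten [seq [seq sig i m'.+1 ++ s | s <- Slist m'] | i <- rev (iota 1 m'.+1)]
  end.

(* tau_k (0-based index k: tau k corresponds to the paper's tau_{k+1}) *)
Definition tau (m k : nat) : word := nth [::] (Slist m) k.

Definition Mentry (m k l : nat) : nat :=
  if excluded_middle_informative (normal m (tau m k) (tau m l)) then 1 else 0.

(* Main.v *)
Require Import Defs.
From mathcomp Require Import all_boot.
From mathcomp Require Import zify.
From Stdlib Require Import ClassicalEpsilon.
Set Implicit Arguments. Unset Strict Implicit. Unset Printing Implicit Defensive.

Lemma beq_catl p u v : beq u v -> beq (p ++ u) (p ++ v).
Proof.
elim=> {u v} [w|u v _ IH|u v w _ IH1 _ IH2|u v i j h|u v i j h].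
- exact: beq_refl.
- exact: beq_sym.
- exact: beq_trans IH2.
- rewrite !(catA p); exact: beq_comm.
- rewrite !(catA p); exact: beq_braid.
Qed.

Lemma beq_catr s u v : beq u v -> beq (u ++ s) (v ++ s).
Proof.
elim=> {u v} [w|u v _ IH|u v w _ IH1 _ IH2|u v i j h|u v i j h].
- exact: beq_refl.
- exact: beq_sym.
- exact: beq_trans IH2.
- rewrite -!catA /=; exact: beq_comm.
- rewrite -!catA /=; exact: beq_braid.
Qed.

Lemma beq_cons x u v : beq u v -> beq (x :: u) (x :: v).
Proof. exact: (beq_catl [:: x]). Qed.

Lemma beq_cat u v u' v' : beq u u' -> beq v v' -> beq (u ++ v) (u' ++ v').
Proof. move=> h1 h2; apply: beq_trans (beq_catr _ h1) (beq_catl _ h2). Qed.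

Lemma beq_size u v : beq u v -> size u = size v.
Proof.
elim=> {u v} [w|u v _ ->|u v w _ -> _ ->|u v i j _|u v i j _] //;
by rewrite !size_cat.
Qed.

Lemma beq_all (P : pred nat) u v : beq u v -> all P u = all P v.
Proof.
elim=> {u v} [w|u v _ ->|u v w _ -> _ ->|u v i j _|u v i j _] //;
rewrite !all_cat /=; do ! case: (P _) => //=.
Qed.

Lemma beq_wf n u v : beq u v -> wf n u = wf n v.
Proof. exact: beq_all. Qed.

Definition bfar (i j : nat) := (i.+1 < j) || (j.+1 < i).
Definition badj (i j : nat) := (i.+1 == j) || (j.+1 == i).

Lemma bfarC i j : bfar i j = bfar j i.
Proof. by rewrite /bfar orbC. Qed.
Lemma badjC i j : badj i j = badj j i.
Proof. by rewrite /badj orbC. Qed.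
Lemma bfar_neq i j : bfar i j -> (i == j) = false.
Proof. rewrite /bfar => h; apply/eqP => e; subst; lia. Qed.
Lemma badj_neq i j : badj i j -> (i == j) = false.
Proof. rewrite /badj => h; apply/eqP => e; subst; lia. Qed.
Lemma badj_nfar i j : badj i j -> bfar i j = false.
Proof. rewrite /badj /bfar => h; apply/negbTE; lia. Qed.
Lemma neq_nfar_adj i j : i != j -> bfar i j = false -> badj i j.
Proof. rewrite /badj /bfar => h1 h2; lia. Qed.

Lemma bcomm u v i j : bfar i j -> beq (u ++ i :: j :: v) (u ++ j :: i :: v).
Proof. exact: beq_comm. Qed.
Lemma bbraid u v i j : badj i j -> beq (u ++ i :: j :: i :: v) (u ++ j :: i :: j :: v).
Proof. exact: beq_braid. Qed.
Lemma bcomm0 v i j : bfar i j -> beq (i :: j :: v) (j :: i :: v).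
Proof. exact: (bcomm [::]). Qed.
Lemma bbraid0 v i j : badj i j -> beq (i :: j :: i :: v) (j :: i :: j :: v).
Proof. exact: (bbraid [::]). Qed.

Fixpoint rhof (f : nat) (i : nat) (w : word) : option word :=
  if f is f'.+1 then
    if w is j :: v then
      if i == j then Some v
      else if bfar i j then omap (cons j) (rhof f' i v)
      else obind (fun r => omap (fun t => j :: i :: t) (rhof f' j r)) (rhof f' i v)
    else None
  else None.

Lemma rhof_size f i w r : rhof f i w = Some r -> size w = (size r).+1.
Proof.
elim: f i w r => [|f IH] i [|j v] r //=.
case: eqP => [_ [<-]//|_].
case: ifP => _.
  by case E: (rhof f i v) => [r'|] //= [<-] /=; rewrite (IH _ _ _ E).
case E: (rhof f i v) => [r'|] //=; case E2: (rhof f j r') => [t|] //= [<-] /=.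
by rewrite (IH _ _ _ E) (IH _ _ _ E2).
Qed.

Lemma rhof_enough f g i w : size w <= f -> size w <= g -> rhof f i w = rhof g i w.
Proof.
elim: f g i w => [|f IH] [|g] i [|j v] //= hf hg.
case: eqP => // _.
rewrite (IH g i v) //; case: ifP => // _.
case E: (rhof g i v) => [r|] //=.
have hr := rhof_size E.
by rewrite (IH g j r) //; move: hf hg; rewrite /= hr; lia.
Qed.

Definition rho i w := rhof (size w) i w.

Lemma rho_nil i : rho i [::] = None.
Proof. by []. Qed.

Lemma rho_size i w r : rho i w = Some r -> size w = (size r).+1.
Proof. exact: rhof_size. Qed.

Lemma rho_cons i j v : rho i (j :: v) =
  if i == j then Some v
  else if bfar i j then omap (cons j) (rho i v)
  else obind (fun r => omap (fun t => j :: i :: t) (rho j r)) (rho i v).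
Proof.
rewrite /rho /=; case: eqP => // _; case: ifP => // _.
case E: (rhof (size v) i v) => [r|] //=.
have hr := rhof_size E.
by rewrite (@rhof_enough (size v) (size r)) // hr.
Qed.

Lemma rho_eq i v : rho i (i :: v) = Some v.
Proof. by rewrite rho_cons eqxx. Qed.
Lemma rho_far i j v : bfar i j -> rho i (j :: v) = omap (cons j) (rho i v).
Proof. by move=> h; rewrite rho_cons (bfar_neq h) h. Qed.
Lemma rho_adj i j v : badj i j ->
  rho i (j :: v) = obind (fun r => omap (fun t => j :: i :: t) (rho j r)) (rho i v).
Proof. by move=> h; rewrite rho_cons (badj_neq h) (badj_nfar h). Qed.

Lemma rho_sound_n n i w r : size w <= n -> rho i w = Some r -> beq w (i :: r).
Proof.
elim: n i w r => [|n IH] i [|j v] r //=; rewrite ?rho_nil //.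
move=> hs; rewrite rho_cons; case: eqP => [-> [<-]|ne]; first exact: beq_refl.
case: ifP => hf.
  case E: (rho i v) => [r'|] //= [<-].
  apply: beq_trans (beq_cons _ (IH _ _ _ hs E)) _.
  by apply: bcomm0; rewrite bfarC.
have ha : badj j i by rewrite badjC; apply: neq_nfar_adj => //; apply/eqP.
case E: (rho i v) => [r1|] //=; case E2: (rho j r1) => [t|] //= [<-].
have h1 := IH _ _ _ hs E.
have hs1 : size r1 <= n by move: hs; rewrite (rho_size E); lia.
have h2 := IH _ _ _ hs1 E2.
apply: beq_trans (beq_cons _ (beq_trans h1 (beq_cons _ h2))) _.
exact: bbraid0.
Qed.

Lemma rho_sound i w r : rho i w = Some r -> beq w (i :: r).
Proof. exact: (rho_sound_n (leqnn _)). Qed.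

Definition Rel (o1 o2 : option word) :=
  match o1, o2 with
  | Some a, Some b => beq a b
  | None, None => True
  | _, _ => False
  end.

Definition Sim (o1 o2 : option word) :=
  forall x, o1 = Some x -> exists2 y, o2 = Some y & beq x y.

Lemma Rel_of o1 o2 : Sim o1 o2 -> Sim o2 o1 -> Rel o1 o2.
Proof.
case: o1 => [a|]; case: o2 => [b|] //= h1 h2.
- by have [y [<-]] := h1 a erefl.
- by have [y] := h1 a erefl.
- by have [y] := h2 b erefl.
Qed.

Lemma Rel_sym o1 o2 : Rel o1 o2 -> Rel o2 o1.
Proof. case: o1 => [a|]; case: o2 => [b|] //=; exact: beq_sym. Qed.

Lemma Rel_trans o1 o2 o3 : Rel o1 o2 -> Rel o2 o3 -> Rel o1 o3.
Proof. case: o1 => [a|]; case: o2 => [b|]; case: o3 => [c|] //=; exact: beq_trans. Qed.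

Lemma Rel_omap f o1 o2 : (forall a b, beq a b -> beq (f a) (f b)) ->
  Rel o1 o2 -> Rel (omap f o1) (omap f o2).
Proof. by move=> hf; case: o1 => [a|]; case: o2 => [b|] //=; apply: hf. Qed.

Definition IHR (S : nat) := forall u v, size u < S -> beq u v -> forall i, Rel (rho i u) (rho i v).

Lemma IHR_use S k u u' x : IHR S -> size u < S -> beq u u' ->
  rho k u' = Some x -> exists2 y, rho k u = Some y & beq y x.
Proof.
move=> H hs e hx; have := H _ _ hs e k; rewrite hx.
by case: (rho k u) => [y|] //= hy; exists y.
Qed.

Ltac ocase E := let r := fresh "r" in let e := fresh "E" in
  case e : E => [r|] //=.

Lemma base_comm S a b v i : IHR S -> size (a :: b :: v) <= S -> bfar a b ->
  Sim (rho i (a :: b :: v)) (rho i (b :: a :: v)).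
Proof.
move=> H hS hab x; have hba : bfar b a by rewrite bfarC.
case: (eqVneq i a) => [->|nia].
  rewrite rho_eq (rho_far _ hab) rho_eq => -[<-]; exists (b :: v) => //; exact: beq_refl.
case: (eqVneq i b) => [->|nib].
  rewrite (rho_far _ hba) rho_eq rho_eq => -[<-]; exists (a :: v) => //; exact: beq_refl.
case Hia: (bfar i a); case Hib: (bfar i b).
- rewrite (rho_far _ Hia) (rho_far _ Hib) (rho_far _ Hib) (rho_far _ Hia).
  case E: (rho i v) => [r|] //= [<-]; eexists; first reflexivity; exact: bcomm0.
- have Aib : badj i b by apply: neq_nfar_adj.
  have Hai : bfar a i by rewrite bfarC.
  rewrite (rho_far _ Hia) (rho_adj _ Aib) (rho_adj _ Aib) (rho_far _ Hia).
  case E: (rho i v) => [r|] //=; rewrite (rho_far _ hba).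
  case E2: (rho b r) => [t|] //= [<-]; eexists; first reflexivity.
  apply: beq_trans (bcomm0 _ hab) _; apply: beq_cons; exact: bcomm0.
- have Aia : badj i a by apply: neq_nfar_adj.
  have Hbi : bfar b i by rewrite bfarC.
  rewrite (rho_adj _ Aia) (rho_far _ Hib) (rho_far _ Hib) (rho_adj _ Aia).
  case E: (rho i v) => [r|] //=; rewrite (rho_far _ hab).
  case E2: (rho a r) => [t|] //= [<-]; eexists; first reflexivity.
  apply: beq_trans (bcomm0 _ hab); apply: beq_cons; exact: bcomm0.
- have Aia : badj i a by apply: neq_nfar_adj.
  have Aib : badj i b by apply: neq_nfar_adj.
  have Aai : badj a i by rewrite badjC.
  have Abi : badj b i by rewrite badjC.
  rewrite (rho_adj _ Aia) (rho_adj _ Aib).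
  case E: (rho i v) => [r|] //=.
  case E2: (rho b r) => [s|] //=.
  rewrite (rho_far _ hab) (rho_adj _ Aai).
  case E3: (rho a s) => [t|] //=.
  case E4: (rho i t) => [q|] //= [<-].
  have sz := rho_size E; have sz2 := rho_size E2; have sz3 := rho_size E3;
  have sz4 := rho_size E4.
  have er : beq r (a :: b :: i :: q).
    apply: beq_trans (rho_sound E2) _.
    apply: beq_trans (beq_cons _ (rho_sound E3)) _.
    apply: beq_trans (beq_cons _ (beq_cons _ (rho_sound E4))) _.
    exact: bcomm0.
  have l1 : size r < S by move: hS => /=; lia.
  have [s' E5 e5] := IHR_use (k := a) H l1 er (rho_eq _ _).
  rewrite (rho_adj _ Aib) (rho_adj _ Aia) E /= E5 /= (rho_far _ hba) (rho_adj _ Abi).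
  have sz5 := rho_size E5.
  have l2 : size s' < S by move: hS => /=; lia.
  have [t' E6 e6] := IHR_use (k := b) H l2 e5 (rho_eq _ _).
  rewrite E6 /=.
  have sz6 := rho_size E6.
  have l3 : size t' < S by move: hS => /=; lia.
  have [q' E7 e7] := IHR_use (k := i) H l3 e6 (rho_eq _ _).
  rewrite E7 /=; eexists; first reflexivity.
  apply: beq_trans (beq_catl [:: b; i; a; i; b] (beq_sym e7)).
  apply: beq_trans (bbraid [:: a] _ Aib) _.
  apply: beq_trans (bcomm0 _ hab) _.
  apply: beq_trans (bcomm [:: b; a; i] _ hba) _.
  exact: (bbraid [:: b] _ Aai).
Qed.

Lemma base_braid a b v i : badj a b ->
  Sim (rho i (a :: b :: a :: v)) (rho i (b :: a :: b :: v)).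
Proof.
move=> hab x; have hba : badj b a by rewrite badjC.
case: (eqVneq i a) => [->|nia].
  rewrite rho_eq (rho_adj _ hab) rho_eq /= rho_eq /= => -[<-].
  exists (b :: a :: v) => //; exact: beq_refl.
case: (eqVneq i b) => [->|nib].
  rewrite (rho_adj _ hba) rho_eq /= rho_eq rho_eq /= => -[<-].
  exists (a :: b :: v) => //; exact: beq_refl.
case Hia: (bfar i a); case Hib: (bfar i b).
- repeat (rewrite (rho_far _ Hia) || rewrite (rho_far _ Hib)).
  case E: (rho i v) => [r|] //= [<-]; eexists; first reflexivity; exact: bbraid0.
- have Aib : badj i b by apply: neq_nfar_adj.
  have Hai : bfar a i by rewrite bfarC.
  have Abi : badj b i by rewrite badjC.
  rewrite (rho_far _ Hia) (rho_adj _ Aib) (rho_far _ Hia).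
  case E: (rho i v) => [r|] //=; rewrite (rho_adj _ hba).
  case E2: (rho b r) => [s|] //=.
  case E3: (rho a s) => [t|] //= [<-].
  rewrite (rho_adj _ Aib) (rho_far _ Hia) (rho_adj _ Aib) E /= E2 /=.
  rewrite (rho_adj _ hba) rho_eq /= (rho_far _ Hai) E3 /=.
  eexists; first reflexivity.
  apply: beq_trans (bcomm [:: a; b] _ Hia) _.
  apply: beq_trans (bbraid0 _ hab) _.
  apply: beq_trans (bbraid [:: b; a] _ Abi) _.
  exact: (bcomm [:: b] _ Hai).
- have Aia : badj i a by apply: neq_nfar_adj.
  have Hbi : bfar b i by rewrite bfarC.
  have Aai : badj a i by rewrite badjC.
  rewrite (rho_adj _ Aia) (rho_far _ Hib) (rho_adj _ Aia).
  case E: (rho i v) => [r|] //=.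
  case E2: (rho a r) => [s|] //=.
  rewrite (rho_adj _ hab) rho_eq /= (rho_far _ Hbi).
  case E3: (rho b s) => [t|] //= [<-].
  rewrite (rho_far _ Hib) (rho_adj _ Aia) (rho_far _ Hib) E /= (rho_adj _ hab) E2 /= E3 /=.
  eexists; first reflexivity.
  apply: beq_trans (beq_cons _ (bcomm0 _ Hib)) _.
  apply: beq_trans (bbraid [:: a; b] _ Aia) _.
  apply: beq_trans (bbraid0 _ hab) _.
  exact: (bcomm [:: b; a] _ Hbi).
- have Aia : badj i a by apply: neq_nfar_adj.
  have Aib : badj i b by apply: neq_nfar_adj.
  exfalso; move: Aia Aib hab nia nib; rewrite /badj; lia.
Qed.

Lemma Rel_refl o : Rel o o.
Proof. case: o => //= a; exact: beq_refl. Qed.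

Lemma ctx S A B v p : IHR S -> size (p ++ A ++ v) <= S ->
  (forall i, Rel (rho i (A ++ v)) (rho i (B ++ v))) ->
  (forall q, beq (q ++ A ++ v) (q ++ B ++ v)) ->
  forall i, Rel (rho i (p ++ A ++ v)) (rho i (p ++ B ++ v)).
Proof.
move=> H; elim: p => [|x p IH] //= hs hb hq i.
rewrite !rho_cons; case: eqP => _; first exact: hq.
have hs' : size (p ++ A ++ v) <= S by apply: leq_trans hs.
case: ifP => _.
  apply: Rel_omap; [exact: beq_cons | exact: IH].
have := IH hs' hb hq i.
case E1: (rho i (p ++ A ++ v)) => [r1|]; case E2: (rho i (p ++ B ++ v)) => [r2|] //= e.
apply: Rel_omap; first by move=> a b; apply: (beq_catl [:: x; i]).
apply: H e _; move: hs; rewrite /= (rho_size E1); lia.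
Qed.

Lemma rho_inv S : IHR S.
Proof.
elim: S => [|S IHS] u v //= hs e.
elim: e hs => {u v}.
- move=> w _ i; exact: Rel_refl.
- move=> u v e IH hs i; apply: Rel_sym; apply: IH; by rewrite (beq_size e).
- move=> u v w e1 IH1 e2 IH2 hs i; apply: Rel_trans (IH1 hs i) (IH2 _ i).
  by rewrite -(beq_size e1).
- move=> u v a b hab hs; apply: (ctx IHS) => //.
  + move=> i; apply: Rel_of; apply: base_comm IHS _ _ => //.
    * by move: hs; rewrite !size_cat /=; lia.
    * by move: hs; rewrite !size_cat /=; lia.
    * by rewrite bfarC.
  + move=> q; exact: beq_comm.
- move=> u v a b hab hs; apply: (ctx IHS) => //.
  + move=> i; apply: Rel_of; apply: base_braid => //.
    by rewrite badjC.
  + move=> q; exact: beq_braid.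
Qed.

Lemma cancel1 i u v : beq (i :: u) (i :: v) -> beq u v.
Proof.
move=> e; have := rho_inv (leqnn _) e i; by rewrite !rho_eq.
Qed.

Lemma cancel_pre p u v : beq (p ++ u) (p ++ v) -> beq u v.
Proof. elim: p => //= x p IH e; apply: IH; exact: cancel1 e. Qed.

Lemma lcm_far i j u v : bfar i j -> beq (i :: u) (j :: v) ->
  exists w, beq u (j :: w) /\ beq v (i :: w).
Proof.
move=> h e; have := rho_inv (leqnn _) e i.
rewrite rho_eq (rho_far _ h).
case E: (rho i v) => [w|] //= e2; exists w; split => //.
exact: rho_sound.
Qed.

Lemma lcm_adj i j u v : badj i j -> beq (i :: u) (j :: v) ->
  exists w, beq u (j :: i :: w) /\ beq v (i :: j :: w).
Proof.
move=> h e; have := rho_inv (leqnn _) e i.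
rewrite rho_eq (rho_adj _ h).
case E: (rho i v) => [r|] //=; case E2: (rho j r) => [w|] //= e2.
exists w; split => //.
apply: beq_trans (rho_sound E) _; apply: beq_cons; exact: rho_sound.
Qed.

Definition dv (x z : word) := exists w, beq (x ++ w) z.

Lemma dv_refl x : dv x x.
Proof. by exists [::]; rewrite cats0; exact: beq_refl. Qed.

Lemma dv_nil x : dv [::] x.
Proof. by exists x; exact: beq_refl. Qed.

Lemma dv_beqr x z z' : dv x z -> beq z z' -> dv x z'.
Proof. by case=> w h e; exists w; exact: beq_trans e. Qed.

Lemma dv_beql x x' z : beq x x' -> dv x z -> dv x' z.
Proof. move=> e [w h]; exists w; apply: beq_trans h; apply: beq_catr; exact: beq_sym. Qed.

Lemma dv_trans x y z : dv x y -> dv y z -> dv x z.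
Proof.
case=> w1 h1 [w2 h2]; exists (w1 ++ w2); rewrite catA.
exact: beq_trans (beq_catr _ h1) h2.
Qed.

Lemma dv_cat p x z : dv x z -> dv (p ++ x) (p ++ z).
Proof. case=> w h; exists w; rewrite -catA; exact: beq_catl. Qed.

Lemma dv_cons a x z : dv x z -> dv (a :: x) (a :: z).
Proof. exact: (dv_cat [:: a]). Qed.

Lemma dv_cancel p x z : dv (p ++ x) (p ++ z) -> dv x z.
Proof. case=> w h; exists w; apply: (cancel_pre (p := p)); by rewrite catA. Qed.

Lemma dv_cancel1 a x z : dv (a :: x) (a :: z) -> dv x z.
Proof. exact: (dv_cancel (p := [:: a])). Qed.

Lemma dv_pre x w : dv x (x ++ w).
Proof. exists w; exact: beq_refl. Qed.

Lemma LC L P Q x i : size P <= L -> dv x P -> dv [:: i] P -> dv x Q -> dv [:: i] Q ->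
  exists m, [/\ dv x m, dv [:: i] m, dv m P & dv m Q].
Proof.
elim: L P Q x i => [|L IH] P Q x i hs.
  case: x => [|j x'] _ [w1 h1].
  - by move: hs; rewrite -(beq_size h1).
  - by move: hs; rewrite -(beq_size h1).
case: x => [|j x'].
  move=> _ hP _ hQ; exists [:: i]; split => //; [exact: dv_nil | exact: dv_refl].
case: (eqVneq i j) => [<-|nij].
  move=> hP _ hQ _; exists (i :: x'); split => //; first exact: dv_refl.
  by exists x'; exact: beq_refl.
move=> [w2 h2] [w1 h1] [w2' h2'] [w1' h1'].
have e : beq (i :: w1) (j :: (x' ++ w2)) by apply: beq_trans h1 (beq_sym h2).
have e' : beq (i :: w1') (j :: (x' ++ w2')) by apply: beq_trans h1' (beq_sym h2').
have hsz := beq_size h1.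
case hf: (bfar i j).
- have [w [ew1 ew2]] := lcm_far hf e.
  have [w' [ew1' ew2']] := lcm_far hf e'.
  have hfji : bfar j i by rewrite bfarC.
  have p1 : size (i :: w) <= L by move: hs; rewrite -hsz /= (beq_size ew1) /=; lia.
  have p2 : dv x' (i :: w) by exists w2.
  have p3 : dv [:: i] (i :: w) by exists w; exact: beq_refl.
  have p4 : dv x' (i :: w') by exists w2'.
  have p5 : dv [:: i] (i :: w') by exists w'; exact: beq_refl.
  have [m' [d1 d2 d3 d4]] := IH _ _ _ _ p1 p2 p3 p4 p5.
  exists (j :: m'); split.
  + exact: dv_cons.
  + case: d2 => t ht; exists (j :: t).
    apply: beq_trans (bcomm0 _ hf) _; apply: beq_cons; exact: ht.
  + apply: dv_beqr (dv_cons j d3) _.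
    apply: beq_trans (bcomm0 _ hfji) _.
    apply: beq_trans _ h1; apply: beq_cons; exact: beq_sym.
  + apply: dv_beqr (dv_cons j d4) _.
    apply: beq_trans (bcomm0 _ hfji) _.
    apply: beq_trans _ h1'; apply: beq_cons; exact: beq_sym.
- have ha : badj i j by apply: neq_nfar_adj.
  have haji : badj j i by rewrite badjC.
  have [w [ew1 ew2]] := lcm_adj ha e.
  have [w' [ew1' ew2']] := lcm_adj ha e'.
  have p1 : size (i :: j :: w) <= L by move: hs; rewrite -hsz /= (beq_size ew1) /=; lia.
  have p2 : dv x' (i :: j :: w) by exists w2.
  have p3 : dv [:: i] (i :: j :: w) by exists (j :: w); exact: beq_refl.
  have p4 : dv x' (i :: j :: w') by exists w2'.
  have p5 : dv [:: i] (i :: j :: w') by exists (j :: w'); exact: beq_refl.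
  have [m' [d1 d2 d3 d4]] := IH _ _ _ _ p1 p2 p3 p4 p5.
  case: d2 => m'' hm''.
  have d3' : dv m'' (j :: w).
    apply: (dv_cancel1 (a := i)); apply: dv_beql d3; exact: beq_sym.
  have d4' : dv m'' (j :: w').
    apply: (dv_cancel1 (a := i)); apply: dv_beql d4; exact: beq_sym.
  have q1 : size (j :: w) <= L by move: hs; rewrite -hsz /= (beq_size ew1) /=; lia.
  have q3 : dv [:: j] (j :: w) by exists w; exact: beq_refl.
  have q5 : dv [:: j] (j :: w') by exists w'; exact: beq_refl.
  have [m3 [f1 f2 f3 f4]] := IH _ _ _ _ q1 d3' q3 d4' q5.
  exists (j :: i :: m3); split.
  + apply: dv_cons; apply: dv_trans d1 _.
    apply: (dv_beql hm''); exact: dv_cons f1.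
  + case: f2 => t ht; exists (j :: i :: t).
    apply: beq_trans (bbraid0 _ ha) _.
    apply: beq_catl [:: j; i] _ _ ht.
  + apply: dv_beqr (dv_cat [:: j; i] f3) _ => /=.
    apply: beq_trans (bbraid0 _ haji) _.
    apply: beq_trans _ h1; apply: beq_cons; exact: beq_sym.
  + apply: dv_beqr (dv_cat [:: j; i] f4) _ => /=.
    apply: beq_trans (bbraid0 _ haji) _.
    apply: beq_trans _ h1'; apply: beq_cons; exact: beq_sym.
Qed.

Lemma GC z P Q x : dv x P -> dv z P -> dv x Q -> dv z Q ->
  exists m, [/\ dv x m, dv z m, dv m P & dv m Q].
Proof.
elim: z P Q x => [|i z IH] P Q x hxP hzP hxQ hzQ.
  exists x; split => //; [exact: dv_refl | exact: dv_nil].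
have hiP : dv [:: i] P by apply: dv_trans hzP; exists z; exact: beq_refl.
have hiQ : dv [:: i] Q by apply: dv_trans hzQ; exists z; exact: beq_refl.
have [m1 [a1 a2 a3 a4]] := LC (leqnn _) hxP hiP hxQ hiQ.
case: a2 => m1' hm1.
case: a3 => r hr; case: a4 => r' hr'.
have eP : beq (i :: (m1' ++ r)) P by apply: beq_trans (beq_catr r hm1) hr.
have eQ : beq (i :: (m1' ++ r')) Q by apply: beq_trans (beq_catr r' hm1) hr'.
have hz1 : dv z (m1' ++ r).
  apply: (dv_cancel1 (a := i)); apply: dv_beqr hzP _; exact: beq_sym.
have hz2 : dv z (m1' ++ r').
  apply: (dv_cancel1 (a := i)); apply: dv_beqr hzQ _; exact: beq_sym.
have [m' [b1 b2 b3 b4]] := IH _ _ m1' (dv_pre _ _) hz1 (dv_pre _ _) hz2.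
exists (i :: m'); split.
- apply: dv_trans a1 _; apply: (dv_beql hm1); exact: dv_cons b1.
- exact: dv_cons.
- exact: dv_beqr (dv_cons i b3) eP.
- exact: dv_beqr (dv_cons i b4) eQ.
Qed.

Definition sw (i k : nat) := if k == i then i.+1 else if k == i.+1 then i else k.

Lemma swP i k : (k = i /\ sw i k = i.+1) \/ (k = i.+1 /\ sw i k = i) \/
  (k <> i /\ k <> i.+1 /\ sw i k = k).
Proof. rewrite /sw; case: eqP => h1; [by left|]; case: eqP => h2; [by right; left| by right; right]. Qed.
Ltac swgen := repeat match goal with H : context [sw _ _] |- _ => revert H end;
  repeat match goal with |- context [sw ?i ?k] => have := swP i k; move: (sw i k) => ? end; intros.

Lemma swK i k : sw i (sw i k) = k.
Proof. swgen; lia. Qed.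

Lemma sw_inj i : injective (sw i).
Proof. exact: can_inj (swK i). Qed.

Lemma sw_range i n k : 0 < i < n -> k <= n -> sw i k <= n.
Proof. move=> h hk; swgen; lia. Qed.

Lemma sw_lt i x y : 0 < i ->
  ((0 < sw i x) && (sw i x < sw i y)) && ~~ ((x == i.+1) && (y == i)) =
  ((0 < x) && (x < y)) && ~~ ((x == i) && (y == i.+1)).
Proof.
move=> hi; swgen; apply/idP/idP; lia.
Qed.

Definition perm (w : word) : nat -> nat := foldr (fun i f k => sw i (f k)) id w.

Lemma perm_cons i w k : perm (i :: w) k = sw i (perm w k).
Proof. by []. Qed.

Lemma perm_cat u v k : perm (u ++ v) k = perm u (perm v k).
Proof. by elim: u => //= i u ->. Qed.

Lemma perm_rcons w i k : perm (rcons w i) k = perm w (sw i k).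
Proof. by rewrite -cats1 perm_cat. Qed.

Lemma perm_inj w : injective (perm w).
Proof. elim: w => //= i w IH x y /sw_inj; exact: IH. Qed.

Lemma beq_perm u v : beq u v -> forall k, perm u k = perm v k.
Proof.
elim=> {u v}.
- by [].
- by move=> u v _ IH k; rewrite IH.
- by move=> u v w _ IH1 _ IH2 k; rewrite IH1 IH2.
- move=> u v i j h k.
- rewrite !perm_cat /=; congr (perm u _); move: h; rewrite /bfar => h.
  swgen; lia.
- move=> u v i j h k; rewrite !perm_cat /=; congr (perm u _); move: h; rewrite /badj => h.
  swgen; lia.
Qed.

Definition inv n (f : nat -> nat) : nat :=
  \sum_(p : 'I_n.+1 * 'I_n.+1 | (0 < p.1) && (p.1 < p.2)) (f p.2 < f p.1).

Lemma inv_ext n f g : (forall k, k <= n -> f k = g k) -> inv n f = inv n g.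
Proof.
move=> h; apply: eq_bigr => -[x y] _ /=; rewrite !h //; by rewrite -ltnS.
Qed.

Lemma inv_id n : inv n id = 0.
Proof. by apply: big1 => -[x y] /= /andP[_ h]; rewrite ltnNge ltnW. Qed.

Lemma inv_sw n f i : 0 < i < n -> f i != f i.+1 ->
  inv n (fun k => f (sw i k)) + (f i.+1 < f i) = inv n f + (f i < f i.+1).
Proof.
move=> /andP[hi0 hin] hne.
pose swo (x : 'I_n.+1) : 'I_n.+1 := inord (sw i x).
have swoE x : val (swo x) = sw i x.
  rewrite /swo /= inordK // ltnS; apply: sw_range; [by rewrite hi0 hin | by rewrite -ltnS].
have swoK : involutive swo by move=> x; apply: val_inj; rewrite !swoE swK.
pose h (p : 'I_n.+1 * 'I_n.+1) := (swo p.1, swo p.2).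
have hinj : injective h.
  by move=> [a b] [c d] /= [/(inv_inj swoK) -> /(inv_inj swoK) ->].
rewrite /inv (reindex_inj hinj) /=.
under eq_bigr => p _ do rewrite !swoE !swK.
pose e1 : 'I_n.+1 * 'I_n.+1 := (inord i, inord i.+1).
pose e2 : 'I_n.+1 * 'I_n.+1 := (inord i.+1, inord i).
have vi : val (inord i : 'I_n.+1) = i by rewrite /= inordK // ltnW.
have vi1 : val (inord i.+1 : 'I_n.+1) = i.+1 by rewrite /= inordK.
rewrite (bigD1 e2) /=; last by rewrite !swoE vi vi1 /sw eqxx eqn_leq ltnn /= eqxx; lia.
rewrite [in RHS](bigD1 e1) /=; last by rewrite vi vi1 hi0 ltnSn.
rewrite vi vi1.
have -> : \sum_(i0 : 'I_n.+1 * 'I_n.+1 | (0 < swo i0.1 < swo i0.2) && (i0 != e2)) (f i0.2 < f i0.1)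
  = \sum_(i0 : 'I_n.+1 * 'I_n.+1 | (0 < i0.1 < i0.2) && (i0 != e1)) (f i0.2 < f i0.1).
  apply: eq_bigl => -[x y] /=.
  rewrite !swoE.
  have := sw_lt x y hi0.
  rewrite /e1 /e2 !xpair_eqE -!val_eqE /= vi vi1 => <-.
  by rewrite -!andbA.
rewrite [LHS]addnC [RHS]addnC !addnA; congr (_ + _); exact: addnC.
Qed.

Definition red n w := size w = inv n (perm w).

Lemma wf_cons n i w : wf n (i :: w) = (0 < i < n) && wf n w.
Proof. by []. Qed.
Lemma wf_cat n u v : wf n (u ++ v) = wf n u && wf n v.
Proof. exact: all_cat. Qed.
Lemma wf_rcons n w i : wf n (rcons w i) = wf n w && (0 < i < n).
Proof. by rewrite /wf all_rcons andbC. Qed.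

Lemma perm_out n w k : wf n w -> (k == 0) || (n < k) -> perm w k = k.
Proof.
elim: w => //= i w IH /andP[hi hw] hk; rewrite IH //.
move: hi hk; swgen; lia.
Qed.

Lemma perm_in n w k : wf n w -> 0 < k <= n -> 0 < perm w k <= n.
Proof.
elim: w => //= i w IH /andP[hi hw] hk; have := IH hw hk.
move: hi; swgen; lia.
Qed.

Lemma inv_rcons n w i : wf n (rcons w i) ->
  inv n (perm (rcons w i)) + (perm w i.+1 < perm w i) = inv n (perm w) + (perm w i < perm w i.+1).
Proof.
rewrite wf_rcons => /andP[hw hi].
rewrite (@inv_ext n _ (fun k => perm w (sw i k))); last by move=> k _; rewrite perm_rcons.
apply: inv_sw => //; apply/eqP => /perm_inj; lia.
Qed.

Lemma inv_le n w : wf n w -> inv n (perm w) <= size w.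
Proof.
elim/last_ind: w => [|w i IH]; first by rewrite /= inv_id.
move=> h; have := inv_rcons h; move: h; rewrite wf_rcons size_rcons => /andP[hw _].
have := IH hw; lia.
Qed.

Lemma RA n w k : wf n (rcons w k) ->
  red n (rcons w k) <-> red n w /\ perm w k < perm w k.+1.
Proof.
move=> h; have := inv_rcons h; move: h; rewrite wf_rcons => /andP[hw hk].
have := inv_le hw; rewrite /red size_rcons => h1 h2.
have hne : perm w k != perm w k.+1 by apply/eqP => /perm_inj; lia.
split.
- move=> e; split; lia.
- case=> e hc; lia.
Qed.

Lemma red_pre n u v : wf n (u ++ v) -> red n (u ++ v) -> red n u.
Proof.
elim/last_ind: v => [|v k IH]; first by rewrite cats0.
rewrite -rcons_cat => hw hr; have [h _] := (RA hw).1 hr.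
by apply: IH => //; move: hw; rewrite wf_rcons => /andP[].
Qed.

Lemma red_beq n u v : beq u v -> red n u -> red n v.
Proof.
move=> e; rewrite /red (beq_size e) => ->; apply: inv_ext => k _; exact: beq_perm.
Qed.

Lemma sw_ii i : sw i i = i.+1.
Proof. by rewrite /sw eqxx. Qed.
Lemma sw_iS i : sw i i.+1 = i.
Proof. rewrite /sw eqxx; case: eqP => //; lia. Qed.
Lemma sw_o i k : k <> i -> k <> i.+1 -> sw i k = k.
Proof. move=> h1 h2; swgen; lia. Qed.

Lemma red_rcons_pre n w k : wf n (rcons w k) -> red n (rcons w k) -> red n w.
Proof. by move=> h1 h2; have [] := (RA h1).1 h2. Qed.

Lemma exch n m w j : size w <= m -> wf n w -> red n w -> 0 < j < n ->
  perm w j.+1 < perm w j -> exists w', beq w (rcons w' j).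
Proof.
elim: m w j => [|m IH] w j.
  by case: w => //= _ _ _ _; lia.
case/lastP: w => [|w0 i]; first by move=> _ _ _ _ /=; lia.
move=> hs hw hr hj hd.
have [hr0 hasc] := (RA hw).1 hr.
move: (hw); rewrite wf_rcons => /andP[hw0 hi].
have pw0 x : perm w0 x = perm (rcons w0 i) (sw i x) by rewrite perm_rcons swK.
have hs0 : size w0 <= m by move: hs; rewrite size_rcons.
case: (eqVneq i j) => [<-|nij]; first by exists w0; exact: beq_refl.
case hf: (bfar i j).
  have hd0 : perm w0 j.+1 < perm w0 j.
    rewrite !pw0 (@sw_o i j) ?(@sw_o i j.+1) //; move: hf; rewrite /bfar; lia.
  have [w1 e1] := IH w0 j hs0 hw0 hr0 hj hd0.
  exists (rcons w1 i).
  rewrite -!cats1 in e1 *.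
  apply: beq_trans (beq_catr [:: i] e1) _.
  rewrite -!catA /=; apply: bcomm; by rewrite bfarC.
have ha : badj i j by apply: neq_nfar_adj.
have hdi : perm (rcons w0 i) i.+1 < perm (rcons w0 i) i.
  by rewrite !perm_rcons sw_ii sw_iS.
set W := rcons w0 i in hd hdi pw0 hs hw hr *.
have [ej|ej] : j = i.+1 \/ i = j.+1 by move: ha; rewrite /badj; lia.
- subst j.
  have hd0 : perm w0 i.+2 < perm w0 i.+1.
    rewrite !pw0 sw_iS (@sw_o i i.+2); lia.
  have [w1 e1] := IH w0 i.+1 hs0 hw0 hr0 hj hd0.
  have hwr1 : wf n (rcons w1 i.+1) by rewrite -(beq_wf n e1).
  have hr1 : red n w1 := red_rcons_pre hwr1 (red_beq e1 hr0).
  have hw1 : wf n w1 by move: hwr1; rewrite wf_rcons => /andP[].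
  have pw1 x : perm w1 x = perm w0 (sw i.+1 x).
    by rewrite (beq_perm e1) perm_rcons swK.
  have hs1 : size w1 <= m by move: hs0; rewrite (beq_size e1) size_rcons; lia.
  have hd1 : perm w1 i.+1 < perm w1 i.
    rewrite !pw1 sw_ii (@sw_o i.+1 i) ?pw0 ?(@sw_o i i.+2) ?sw_ii; lia.
  have [w2 e2] := IH w1 i hs1 hw1 hr1 hi hd1.
  exists (w2 ++ [:: i.+1; i]).
  rewrite /W; rewrite -!cats1 in e1 e2 *.
  apply: beq_trans (beq_catr [:: i] (beq_trans e1 (beq_catr [:: i.+1] e2))) _.
  rewrite -!catA /=; apply: bbraid; exact: ha.
- subst i.
  have hd0 : perm w0 j.+1 < perm w0 j.
    rewrite !pw0 sw_ii (@sw_o j.+1 j); lia.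
  have [w1 e1] := IH w0 j hs0 hw0 hr0 hj hd0.
  have hwr1 : wf n (rcons w1 j) by rewrite -(beq_wf n e1).
  have hr1 : red n w1 := red_rcons_pre hwr1 (red_beq e1 hr0).
  have hw1 : wf n w1 by move: hwr1; rewrite wf_rcons => /andP[].
  have pw1 x : perm w1 x = perm w0 (sw j x).
    by rewrite (beq_perm e1) perm_rcons swK.
  have hs1 : size w1 <= m by move: hs0; rewrite (beq_size e1) size_rcons; lia.
  have hd1 : perm w1 j.+2 < perm w1 j.+1.
    rewrite !pw1 sw_iS (@sw_o j j.+2) ?pw0 ?(@sw_o j.+1 j) ?sw_iS; lia.
  have [w2 e2] := IH w1 j.+1 hs1 hw1 hr1 hi hd1.
  exists (w2 ++ [:: j; j.+1]).
  rewrite /W; rewrite -!cats1 in e1 e2 *.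
  apply: beq_trans (beq_catr [:: j.+1] (beq_trans e1 (beq_catr [:: j] e2))) _.
  rewrite -!catA /=; apply: bbraid; exact: ha.
Qed.

Lemma red_nil_eq n v : red n v -> (forall k, perm v k = k) -> v = [::].
Proof.
move=> hr hp; move: hr; rewrite /red (@inv_ext n _ id) ?inv_id; last by move=> k _; rewrite hp.
by case: v {hp}.
Qed.

Lemma tits n m u v : size u <= m -> wf n u -> wf n v -> red n u -> red n v ->
  (forall k, perm u k = perm v k) -> beq u v.
Proof.
elim: m u v => [|m IH] u v.
  case: u => //= _ _ _ _ hv hp.
  by rewrite (red_nil_eq hv (fun k => esym (hp k))); exact: beq_refl.
case/lastP: u => [|u0 i].
  move=> _ _ _ _ hv hp.
  by rewrite (red_nil_eq hv (fun k => esym (hp k))); exact: beq_refl.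
move=> hs hu hv hru hrv hp.
have [hr0 hasc] := (RA hu).1 hru.
move: (hu); rewrite wf_rcons => /andP[hu0 hi].
have hdv : perm v i.+1 < perm v i by rewrite -!hp !perm_rcons sw_ii sw_iS.
have [v1 e1] := exch (leqnn _) hv hrv hi hdv.
have hwr1 : wf n (rcons v1 i) by rewrite -(beq_wf n e1).
have hr1 : red n v1 := red_rcons_pre hwr1 (red_beq e1 hrv).
have hw1 : wf n v1 by move: hwr1; rewrite wf_rcons => /andP[].
have e0 : beq u0 v1.
  apply: IH => //; first by move: hs; rewrite size_rcons.
  by move=> k; rewrite -(swK i k) -perm_rcons hp (beq_perm e1) perm_rcons.
apply: beq_trans (beq_sym e1); rewrite -!cats1; exact: beq_catr.
Qed.

Ltac ifs := repeat (case: ifP => ?).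

Lemma perm_iota i d k : perm (iota i d) k =
  if (i <= k) && (k < i + d) then k.+1 else if k == i + d then i else k.
Proof.
elim: d k => [|d IH] k.
  by rewrite /= addn0; case: ifP => [/andP[]|_]; [lia|case: eqP => [->|]].
rewrite -addn1 iotaD /= cats1 perm_rcons IH.
swgen; ifs; lia.
Qed.

Lemma perm_sig i m k : 0 < i <= m -> perm (sig i m) k =
  if (i <= k) && (k < m) then k.+1 else if k == m then i else k.
Proof. move=> h; rewrite /sig perm_iota subnKC //; lia. Qed.



Lemma perm_Delta n k : perm (Delta n) k = if (0 < k) && (k <= n) then n.+1 - k else k.
Proof.
elim: n k => [|n IH] k /=; first by case: ifP => //; lia.
rewrite perm_cat IH; case: ifP => h; rewrite perm_sig; try lia; ifs; lia.
Qed.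

Lemma wf_mono n m w : n <= m -> wf n w -> wf m w.
Proof. move=> h; apply: sub_all => i /andP[h1 h2]; rewrite h1 /=; lia. Qed.

Lemma wf_sig i m : 0 < i -> wf m (sig i m).
Proof. move=> h; apply/allP => x; rewrite /sig mem_iota => /andP[h1 h2]; lia. Qed.

Lemma wf_Delta n : wf n (Delta n).
Proof.
elim: n => //= n IH; rewrite wf_cat wf_sig //=; exact: wf_mono IH.
Qed.

Lemma red_iota n i d : 0 < i -> i + d <= n -> red n (iota i d).
Proof.
move=> hi; elim: d => [|d IH] hd; first by rewrite /red /= inv_id.
have hw : wf n (rcons (iota i d) (i + d)).
  rewrite -cats1 -[[:: i + d]]/(iota (i + d) 1) -iotaD; apply/allP => x; rewrite mem_iota; lia.
rewrite -addn1 iotaD /= cats1; apply/(RA hw); split; first by apply: IH; lia.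
rewrite !perm_iota; ifs; lia.
Qed.

Lemma red_sig_cat m s i : wf m s -> red m s -> 0 < i <= m.+1 ->
  wf m.+1 (sig i m.+1 ++ s) /\ red m.+1 (sig i m.+1 ++ s).
Proof.
move=> hw hr hi.
have hw' : wf m.+1 (sig i m.+1 ++ s).
  by rewrite wf_cat wf_sig ?(wf_mono (leqnSn m) hw) //; case/andP: hi.
split => //.
elim/last_ind: s hw hr hw' => [|s k IH] hw hr hw'.
  rewrite cats0 /sig; apply: red_iota; lia.
rewrite -rcons_cat; apply/(RA _); first by rewrite rcons_cat.
move: (hw); rewrite wf_rcons => /andP[hws hk].
have [hrs hasc] := (RA hw).1 hr.
split.
  apply: IH => //; move: hw'; rewrite -rcons_cat wf_rcons => /andP[] //.
rewrite !perm_cat.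
have h1 := perm_in (k := k) hws ltac:(lia).
have h2 := perm_in (k := k.+1) hws ltac:(lia).
rewrite !perm_sig; try lia.
move: h1 h2 hasc; move: (perm s k) (perm s k.+1) => a b; ifs; lia.
Qed.

Lemma red_Delta n : red n (Delta n).
Proof.
elim: n => [|n IH] /=; first by rewrite /red /= inv_id.
have [_ h] := red_sig_cat (i := 1) (wf_Delta n) IH ltac:(lia).
exact: h.
Qed.

Lemma Slist_S m : 0 < m -> Slist m.+1 =
  flatten [seq [seq sig i m.+1 ++ s | s <- Slist m] | i <- rev (iota 1 m.+1)].
Proof. by case: m. Qed.

Lemma size_flat (L : seq nat) (S : seq word) (f : nat -> word -> word) :
  size (flatten [seq [seq f i s | s <- S] | i <- L]) = size L * size S.
Proof. by elim: L => //= i L IH; rewrite size_cat size_map IH. Qed.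

Lemma nth_flat (L : seq nat) (S : seq word) (f : nat -> word -> word) q k :
  q < size L -> k < size S ->
  nth [::] (flatten [seq [seq f i s | s <- S] | i <- L]) (q * size S + k) =
  f (nth 0 L q) (nth [::] S k).
Proof.
elim: L q => //= i L IH [|q] hq hk /=.
  by rewrite nth_cat size_map hk (nth_map [::]).
rewrite nth_cat size_map mulSn -addnA ltnNge leq_addr /= addKn IH //.
Qed.

Lemma size_Slist m : 0 < m -> size (Slist m) = m`!.
Proof.
elim: m => // m IH _; case: (posnP m) => [->//|hm].
by rewrite Slist_S // size_flat size_rev size_iota IH // factS.
Qed.

Lemma nth_rev_iota m q : q < m -> nth 0 (rev (iota 1 m)) q = m - q.
Proof.
move=> h; rewrite nth_rev size_iota // nth_iota; lia.
Qed.

Lemma tau_block m q k : 0 < m -> q < m.+1 -> k < m`! ->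
  tau m.+1 (q * m`! + k) = sig (m.+1 - q) m.+1 ++ tau m k.
Proof.
move=> hm hq hk; rewrite /tau Slist_S // -(size_Slist hm) nth_flat ?size_rev ?size_iota ?size_Slist //.
by rewrite nth_rev_iota.
Qed.

Lemma tau0 m : 0 < m -> tau m 0 = [::].
Proof.
elim: m => // m IH _; case: (posnP m) => [->//|hm].
have := tau_block (q := 0) hm (ltn0Sn _) (fact_gt0 m).
by rewrite mul0n add0n subn0 /sig subnn /= IH.
Qed.

Lemma tau_last m : 0 < m -> tau m (m`!.-1) = Delta m.
Proof.
elim: m => // m IH _; case: (posnP m) => [->//|hm].
have hf := fact_gt0 m.
have -> : (m.+1)`!.-1 = m * m`! + m`!.-1 by rewrite factS; lia.
rewrite tau_block //; last lia.
by rewrite IH // subSn // subnn.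
Qed.

Lemma mem_Slist m x : 0 < m -> x \in Slist m -> wf m x /\ red m x.
Proof.
elim: m x => // m IH x _; case: (posnP m) => [->|hm].
  by rewrite inE => /eqP ->; split => //; rewrite /red /= inv_id.
rewrite Slist_S // => /flattenP[s' /mapP[i hi ->] /mapP[s hs ->]].
have [hw hr] := IH s hm hs.
apply: red_sig_cat => //; move: hi; rewrite mem_rev mem_iota; lia.
Qed.

Lemma tau_wf m k : 0 < m -> k < m`! -> wf m (tau m k) /\ red m (tau m k).
Proof.
move=> hm hk; apply: mem_Slist => //; rewrite /tau; apply: mem_nth.
by rewrite size_Slist.
Qed.

Lemma size_sig i m : size (sig i m) = m - i.
Proof. by rewrite /sig size_iota. Qed.

Lemma decomp m k : 0 < m -> k < (m.+1)`! ->
  exists q r, [/\ q < m.+1, r < m`! & k = q * m`! + r].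
Proof.
move=> hm hk; exists (k %/ m`!), (k %% m`!); split.
- by rewrite ltn_divLR ?fact_gt0 // -factS.
- by rewrite ltn_pmod ?fact_gt0.
- exact: divn_eq.
Qed.

Lemma tau_size m k : 0 < m -> k < m`! ->
  size (tau m k) <= size (Delta m) /\ (k < m`!.-1 -> size (tau m k) < size (Delta m)).
Proof.
elim: m k => // m IH k _; case: (posnP m) => [->|hm].
  by case: k => //= _; split.
move=> hk; have [q [r [hq hr ->]]] := decomp hm hk.
rewrite tau_block // size_cat size_sig /= size_cat size_sig.
have [h1 h2] := IH r hm hr.
have hf := fact_gt0 m.
split; first by lia.
rewrite factS => hlt.
case: (ltnP q m) => hqm; first by lia.
have -> : q = m by lia.
have : r < m`!.-1 by nia.
move/h2; lia.
Qed.

Lemma tau_pos m l : 0 < m -> 0 < l -> l < m`! -> 0 < size (tau m l).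
Proof.
elim: m l => // m IH l _; case: (posnP m) => [->|hm].
  by case: l => // -[].
move=> hl hk; have [q [r [hq hr e]]] := decomp hm hk.
rewrite e tau_block // size_cat size_sig.
case: (posnP q) => [hq0|hq0]; last by lia.
rewrite hq0 /= in e *; rewrite subn0 subnn /=; apply: IH => //; lia.
Qed.

Lemma inv_max n f : inv n f <= inv n (perm (Delta n)).
Proof.
apply: leq_sum => -[x y] /= /andP[h1 h2]; rewrite !perm_Delta.
have hy := ltn_ord y; rewrite ltnS in hy.
have hx : x <= n by apply: leq_trans (ltnW h2) hy.
rewrite h1 hx /= (leq_trans h1 (ltnW h2)) hy /=.
case: (f y < f x) => //=; lia.
Qed.

Lemma red_size_le n z : red n z -> size z <= size (Delta n).
Proof. by rewrite /red (red_Delta n) => ->; exact: inv_max. Qed.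

Lemma dec_Delta n f : (forall k, 0 < k <= n -> 0 < f k <= n) ->
  (forall k, 0 < k < n -> f k.+1 < f k) -> forall k, 0 < k <= n -> f k = n.+1 - k.
Proof.
move=> hr hd.
have H d : forall k, 0 < k -> k + d <= n -> f (k + d) + d <= f k.
  elim: d => [|d IH] k hk hkd; first by rewrite !addn0.
  have h1 : k + d <= n by lia.
  have h2 : 0 < k + d < n by lia.
  have := IH k hk h1; have := hd (k + d) h2.
  rewrite (addnS k d); move: (f (k + d).+1) (f (k + d)) (f k) => a b c; lia.
move=> k hk.
have a1 : 0 < k by lia.
have a2 : k + (n - k) <= n by lia.
have a3 : 1 + (k - 1) <= n by lia.
have h1 := H (n - k) k a1 a2.
have h2 := H (k - 1) 1 (ltn0Sn 0) a3.
have e1 : k + (n - k) = n by lia.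
have e2 : 1 + (k - 1) = k by lia.
rewrite e1 in h1; rewrite e2 in h2.
have a4 : 0 < 1 <= n by lia.
have a5 : 0 < n <= n by lia.
have := hr 1 a4; have := hr n a5.
move: (f 1) (f n) (f k) h1 h2 => a b c; lia.
Qed.

Lemma red_dvD n z : wf n z -> red n z -> dv z (Delta n).
Proof.
move=> hw hr; have hle := red_size_le hr.
move: {2}(size (Delta n) - size z) (leqnn (size (Delta n) - size z)) => d.
elim: d z hw hr hle => [|d IH] z hw hr hle hd.
all: case: (boolP [exists k : 'I_n, (0 < k) && (perm z k < perm z k.+1)]).
- case/existsP => k /andP[hk0 hk].
  have hw' : wf n (rcons z k) by rewrite wf_rcons hw hk0 ltn_ord.
  have hr' := (RA hw').2 (conj hr hk).
  have := red_size_le hr'; rewrite size_rcons; lia.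
- move=> hne.
  have hdesc k : 0 < k < n -> perm z k.+1 < perm z k.
    move=> hk; case: (ltngtP (perm z k) (perm z k.+1)) => // h.
    + by move/existsP: hne; case; exists (Ordinal (proj2 (andP hk))); rewrite /= h; case/andP: hk => ->.
    + by move/perm_inj: h; lia.
  have hp k : perm z k = perm (Delta n) k.
    rewrite perm_Delta; case: ifP => hk.
    + apply: dec_Delta => // x hx; exact: perm_in hw hx.
    + apply: (perm_out hw); lia.
  have e := tits (leqnn _) hw (wf_Delta n) hr (red_Delta n) hp.
  by exists [::]; rewrite cats0.
- case/existsP => k /andP[hk0 hk].
  have hw' : wf n (rcons z k) by rewrite wf_rcons hw hk0 ltn_ord.
  have hr' := (RA hw').2 (conj hr hk).
  have := IH _ hw' hr' (red_size_le hr'); rewrite size_rcons => h.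
  have {}h := h ltac:(lia).
  apply: dv_trans h; exists [:: nat_of_ord k]; rewrite cats1; exact: beq_refl.
- move=> hne.
  have hdesc k : 0 < k < n -> perm z k.+1 < perm z k.
    move=> hk; case: (ltngtP (perm z k) (perm z k.+1)) => // h.
    + by move/existsP: hne; case; exists (Ordinal (proj2 (andP hk))); rewrite /= h; case/andP: hk => ->.
    + by move/perm_inj: h; lia.
  have hp k : perm z k = perm (Delta n) k.
    rewrite perm_Delta; case: ifP => hk.
    + apply: dec_Delta => // x hx; exact: perm_in hw hx.
    + apply: (perm_out hw); lia.
  have e := tits (leqnn _) hw (wf_Delta n) hr (red_Delta n) hp.
  by exists [::]; rewrite cats0.
Qed.

Lemma dv_ldiv n x z : wf n z -> dv x z -> ldiv n x z.
Proof.
move=> hz [w e]; exists w; split => //.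
by move: hz; rewrite -(beq_wf n e) wf_cat => /andP[].
Qed.

Lemma ldiv_dv n x z : ldiv n x z -> dv x z.
Proof. by case=> w [_ e]; exists w. Qed.

Lemma dv_wf n x z : wf n z -> dv x z -> wf n x.
Proof. by move=> hz [w e]; move: hz; rewrite -(beq_wf n e) wf_cat => /andP[]. Qed.

Lemma dv_red n x z : wf n z -> red n z -> dv x z -> red n x.
Proof.
move=> hz hr [w e]; apply: (red_pre (v := w)).
  by rewrite (beq_wf n e).
exact: red_beq (beq_sym e) hr.
Qed.

Lemma DR_perm n w i : wf n w -> red n w -> DR n w i -> 0 < i < n /\ perm w i.+1 < perm w i.
Proof.
move=> hw hr [hi [c [hc e]]]; split => //.
have hw' : wf n (rcons c i) by rewrite -cats1 (beq_wf n e).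
have hr' : red n (rcons c i) by apply: red_beq hr; rewrite -cats1; exact: beq_sym.
have [_ h] := (RA hw').1 hr'.
by rewrite -!(beq_perm e) cats1 !perm_rcons sw_ii sw_iS.
Qed.

Lemma perm_DR n w i : wf n w -> red n w -> 0 < i < n -> perm w i.+1 < perm w i -> DR n w i.
Proof.
move=> hw hr hi hd; split => //.
have [w' e] := exch (leqnn _) hw hr hi hd.
exists w'; split; last by rewrite cats1; exact: beq_sym.
by move: hw; rewrite (beq_wf n e) wf_rcons => /andP[].
Qed.

Lemma DL_dv n y i : DL n y i -> 0 < i < n /\ dv [:: i] y.
Proof. by case=> h [w [_ e]]; split => //; exists w. Qed.

Lemma NC n x y : wf n x -> wf n y -> red n x ->
  normal n x y <-> (forall i, DL n y i -> DR n x i).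
Proof.
move=> hx hy hr; split.
- case=> _ _ H i hDL.
  have [hi [y' ey]] := DL_dv hDL.
  case: (ltngtP (perm x i) (perm x i.+1)) => hc.
  + exfalso.
    have hw' : wf n (rcons x i) by rewrite wf_rcons hx hi.
    have hr' := (RA hw').2 (conj hr hc).
    have [||w [_ e]] := H (rcons x i) hw'.
    * apply: dv_ldiv; [exact: wf_Delta | exact: red_dvD].
    * apply: dv_ldiv; first by rewrite wf_cat hx hy.
      exists y'; rewrite -cats1 -catA; exact: beq_catl.
    * by have := beq_size e; rewrite size_cat size_rcons; lia.
  + exact: perm_DR.
  + by move/perm_inj: hc; lia.
- move=> H; split.
  + apply: dv_ldiv; [exact: wf_Delta | exact: red_dvD].
  + by exists y; split => //; exact: beq_refl.
  move=> z hz hzD hzP.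
  have [m [d1 d2 d3 d4]] := GC (dv_pre x y) (ldiv_dv hzP) (red_dvD hx hr) (ldiv_dv hzD).
  case: d1 => c; case: c => [|k c'] ec.
    apply: (dv_ldiv hx); apply: dv_trans d2 _; exists [::]; rewrite cats0; rewrite cats0 in ec.
    exact: beq_sym ec.
  exfalso.
  have hmw : wf n m := dv_wf (wf_Delta n) d4.
  have hmr : red n m := dv_red (wf_Delta n) (red_Delta n) d4.
  have hw1 : wf n (rcons x k ++ c') by rewrite cat_rcons (beq_wf n ec).
  have hr1 : red n (rcons x k ++ c') by rewrite cat_rcons; exact: red_beq (beq_sym ec) hmr.
  have hw2 : wf n (rcons x k) by move: hw1; rewrite wf_cat => /andP[].
  have [_ hasc] := (RA hw2).1 (red_pre hw1 hr1).
  have hk : 0 < k < n by move: hw2; rewrite wf_rcons => /andP[].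
  case: d3 => r er.
  have e2 : beq (x ++ (k :: c' ++ r)) (x ++ y).
    apply: beq_trans _ er; rewrite -cat_cons catA; exact: beq_catr.
  have e3 := cancel_pre e2.
  have hDL : DL n y k by split => //; apply: (dv_ldiv hy); exists (c' ++ r).
  have [_ hd] := DR_perm hx hr (H k hDL).
  lia.
Qed.

Lemma Mentry1 m k l : normal m (tau m k) (tau m l) -> Mentry m k l = 1.
Proof. by rewrite /Mentry; case: excluded_middle_informative. Qed.
Lemma Mentry0 m k l : ~ normal m (tau m k) (tau m l) -> Mentry m k l = 0.
Proof. by rewrite /Mentry; case: excluded_middle_informative. Qed.
Lemma Mentry_iff m k l m' k' l' :
  (normal m (tau m k) (tau m l) <-> normal m' (tau m' k') (tau m' l')) ->
  Mentry m k l = Mentry m' k' l'.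
Proof.
rewrite /Mentry => h.
case: excluded_middle_informative => a; case: excluded_middle_informative => b //; exfalso; tauto.
Qed.

Lemma NCt n k l : 0 < n -> k < n`! -> l < n`! ->
  normal n (tau n k) (tau n l) <-> (forall i, DL n (tau n l) i -> DR n (tau n k) i).
Proof.
move=> hn hk hl; have [hx hr] := tau_wf hn hk; have [hy _] := tau_wf hn hl.
exact: NC.
Qed.

Lemma DL_nil n i : ~ DL n [::] i.
Proof. by case=> _ [w [_ /beq_size]]. Qed.

Lemma DR_nil n i : ~ DR n [::] i.
Proof. by case=> _ [w [_ /beq_size]]; rewrite size_cat addn1. Qed.

Lemma red_single n i : 0 < i < n -> red n [:: i].
Proof.
move=> hi; have hw : wf n (rcons [::] i) by rewrite /= hi.
apply/(RA hw); split; first by rewrite /red /= inv_id.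
by rewrite /=.
Qed.

Lemma DL_Delta n i : 0 < i < n -> DL n (Delta n) i.
Proof.
move=> hi; split => //; apply: dv_ldiv; first exact: wf_Delta.
apply: red_dvD; [by rewrite /wf /= hi | exact: red_single].
Qed.

Lemma DR_Delta n i : 0 < i < n -> DR n (Delta n) i.
Proof.
move=> hi; apply: perm_DR => //; [exact: wf_Delta | exact: red_Delta |].
rewrite !perm_Delta; ifs; lia.
Qed.

Lemma perm_eq_Delta n x : wf n x -> (forall i, 0 < i < n -> perm x i.+1 < perm x i) ->
  forall j, perm x j = perm (Delta n) j.
Proof.
move=> hw hdesc j; rewrite perm_Delta; case: ifP => hj.
- apply: dec_Delta => // z hz; exact: perm_in hw hz.
- apply: (perm_out hw); lia.
Qed.

Lemma col_last n k : 0 < n -> k < n`!.-1 -> ~ normal n (tau n k) (Delta n).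
Proof.
move=> hn hk hN.
have hk' : k < n`! by have := fact_gt0 n; lia.
have [hx hr] := tau_wf hn hk'.
have H := (NC hx (wf_Delta n) hr).1 hN.
have hdesc i : 0 < i < n -> perm (tau n k) i.+1 < perm (tau n k) i.
  by move=> hi; have [] := DR_perm hx hr (H i (DL_Delta hi)).
have hp := perm_eq_Delta hx hdesc.
have : size (tau n k) = size (Delta n).
  rewrite hr (red_Delta n); apply: inv_ext => j _; exact: hp.
have [_ h] := tau_size hn hk'; have := h hk; lia.
Qed.

Lemma DL_down m y i : wf m y -> DL m.+1 y i -> DL m y i.
Proof.
move=> hy hd; have [hi hdv] := DL_dv hd.
have := dv_wf hy hdv; rewrite /wf /= andbT => hi'.
by split => //; exact: dv_ldiv.
Qed.

Lemma DL_up m y i : DL m y i -> DL m.+1 y i.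
Proof. case=> hi [w [hw e]]; split; [lia | exists w; split => //; exact: wf_mono hw]. Qed.

Lemma DR_c m j x i : wf m x -> red m x -> 0 < j <= m.+1 -> 0 < i < m ->
  DR m.+1 (sig j m.+1 ++ x) i <-> DR m x i.
Proof.
move=> hx hr hj hi.
have [hw' hr'] := red_sig_cat hx hr hj.
have mono a b : 0 < a <= m -> 0 < b <= m ->
  (perm (sig j m.+1) a < perm (sig j m.+1) b) = (a < b).
  move=> ha hb; rewrite !perm_sig //; apply/idP/idP; ifs; lia.
have h1 := perm_in (k := i) hx ltac:(lia).
have h2 := perm_in (k := i.+1) hx ltac:(lia).
split.
- move=> hd; have [_ hp] := DR_perm hw' hr' hd.
  apply: perm_DR => //; by rewrite -mono // -!perm_cat.
- move=> hd; have [_ hp] := DR_perm hx hr hd.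
  apply: perm_DR => //; first lia.
  by rewrite !perm_cat mono.
Qed.

Lemma part2 m q k l : 0 < m -> q < m.+1 -> k < m`! -> l < m`! ->
  Mentry m.+1 (q * m`! + k) l = Mentry m k l.
Proof.
move=> hm hq hk hl; apply: Mentry_iff.
have el : tau m.+1 l = tau m l.
  have := tau_block (q := 0) hm (ltn0Sn m) hl.
  by rewrite mul0n add0n subn0 /sig subnn.
rewrite tau_block // el.
have [hx hr] := tau_wf hm hk; have [hy _] := tau_wf hm hl.
have hj : 0 < m.+1 - q <= m.+1 by lia.
have [hw' hr'] := red_sig_cat hx hr hj.
rewrite (NC hw' (wf_mono (leqnSn m) hy) hr') (NC hx hy hr).
split => H i hd.
- have hd' := DL_up hd; have [hi _] := DL_dv hd.
  exact: (DR_c hx hr hj hi).1 (H i hd').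
- have hd' := DL_down hy hd; have [hi _] := DL_dv hd'.
  exact: (DR_c hx hr hj hi).2 (H i hd').
Qed.

Unset Implicit Arguments.
Theorem lemma2p5 (n : nat) (hn : 2 <= n) :
  (* (i) *)
  [/\ (forall k, k < n`! -> Mentry n k 0 = 1),
      (forall l, l < n`! -> Mentry n (n`!.-1) l = 1),
      (forall l, 0 < l < n`! -> Mentry n 0 l = 0) &
      (forall k, k < n`!.-1 -> Mentry n k (n`!.-1) = 0)] /\
  (* (ii) *)
  (forall q k l, q < n -> k < (n.-1)`! -> l < (n.-1)`! ->
     Mentry n (q * (n.-1)`! + k) l = Mentry n.-1 k l) /\
  (* (iii) *)
  (forall k k', k < n`! -> k' < n`! ->
     (forall i, DR n (tau n k) i <-> DR n (tau n k') i) ->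
     forall l, l < n`! -> Mentry n k l = Mentry n k' l) /\
  (forall l l', l < n`! -> l' < n`! ->
     (forall i, DL n (tau n l) i <-> DL n (tau n l') i) ->
     forall k, k < n`! -> Mentry n k l = Mentry n k l').
Proof.
have hn0 : 0 < n by lia.
have hf := fact_gt0 n.
split; [split|split; [|split]].
- move=> k hk; apply: Mentry1; apply/(NCt hn0 hk hf); rewrite tau0 //.
  by move=> i /DL_nil.
- move=> l hl; apply: Mentry1; rewrite tau_last //.
  have [hy _] := tau_wf hn0 hl.
  apply/(NC (wf_Delta n) hy (red_Delta n)) => i hd.
  have [hi _] := DL_dv hd; exact: DR_Delta.
- move=> l /andP[hl0 hl]; apply: Mentry0; rewrite tau0 // => hN.
  have [hy _] := tau_wf hn0 hl.
  have hpos := tau_pos hn0 hl0 hl.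
  have hr0 : red n [::] by rewrite /red /= inv_id.
  have H := (NC (isT : wf n [::]) hy hr0).1 hN.
  move: hy hpos H; case: (tau n l) => // i y' hy _ H.
  move: hy; rewrite wf_cons => /andP[hi hy'].
  apply: (@DR_nil n i); apply: H; split => //.
  by exists y'; split => //; exact: beq_refl.
- move=> k hk; apply: Mentry0; rewrite tau_last //; exact: col_last.
- case: n hn {hn0 hf} => // -[//|m] _ /= q k l hq hk hl.
  exact: part2.
- move=> k k' hk hk' hDR l hl; apply: Mentry_iff.
  rewrite (NCt hn0 hk hl) (NCt hn0 hk' hl).
  by split => H i hd; apply/hDR; apply: H.
- move=> l l' hl hl' hDL k hk; apply: Mentry_iff.
  rewrite (NCt hn0 hk hl) (NCt hn0 hk hl').
  by split => H i hd; apply: H; apply/hDL.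
Qed.
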